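(* Let $1\le i_1<i_2<\dots<i_m\le n$, and let $H$ be a connected noncrossing graph on vertex set $[n]$ whose unique cycle is $C=(i_1,i_2,\dots,i_m)$ (with edges $\overline{i_1i_2},\dots,\overline{i_{m-1}i_m},\overline{i_mi_1}$). Let $T_1=H\setminus\overline{i_1i_m}$ and $T_j=H\setminus\overline{i_{j-1}i_j}$ for $1<j\le m$. Then in $\mathcal E_n$, \[x_{T_m}=x_{T_1}-x_{T_2}-x_{T_3}-\cdots-x_{T_{m-1}}.\]
   Context: The Fomin–Kirillov algebra $\mathcal E_n$ is the quadratic $\mathbf Q$-algebra with generators $x_{ij}=-x_{ji}$ for distinct $i,j\in[n]$, subject to: $x_{ij}^2=0$; $x_{ij}x_{kl}=x_{kl}x_{ij}$ for distinct $i,j,k,l$; $x_{ij}x_{jk}+x_{jk}x_{ki}+x_{ki}x_{ij}=0$ for distinct $i,j,k$. A graph on $[n]$ is noncrossing if it contains no two edges $\overline{ac},\overline{bd}$ with $a<b<c<d$. For a noncrossing tree $T$ on $[n]$ and a vertex $i$, order the edges $\overline{ij}$ of $T$ at $i$ according to the position of $j$ in the sequence $i-1,i-2,\dots,1,n,n-1,\dots,i+1$ (the clockwise order when vertices are drawn left to right on a line and edges as non-crossing arcs above it). For a noncrossing tree $T$, $x_T\in\mathcal E_n$ denotes the product $x_{a_1b_1}x_{a_2b_2}\cdots x_{a_{n-1}b_{n-1}}$ (with $a_k<b_k$) over the edges of $T$ taken in any order such that, for every vertex $i$, the edges at $i$ occur in the clockwise order just described; such orders exist and all such products are equal in $\mathcal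 E_n$. *)

(* Defs.v *)
From HB Require Import structures.
From mathcomp Require Import all_boot all_order all_algebra.
Set Implicit Arguments. Unset Strict Implicit. Unset Printing Implicit Defensive.
Import Order.TTheory GRing.Theory Num.Theory.

(* Vertices of [n] are encoded 0-based as 'I_n (vertex k+1 of the paper is
   the ordinal k).  An edge {a,b} with a<b is the pair (a,b). A graph on [n]
   is given by its edge set E : {set 'I_n * 'I_n}. *)

Section Graphs.
Variable n : nat.
Notation edge := ('I_n * 'I_n)%type.

Definition nedge (u v : 'I_n) : edge := if (u < v)%N then (u, v) else (v, u).

Definition wf_edges (E : {set edge}) : Prop := forall e, e \in E -> (e.1 < e.2)%N.

Definition noncrossing (E : {set edge}) : Prop :=
  forall e f, e \in E -> f \in E -> ~ [/\ (e.1 < f.1)%N, (f.1 < e.2)%N & (e.2 < f.2)%N].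

Definition adj (E : {set edge}) : rel 'I_n := fun u v => nedge u v \in E.

Definition connected (E : {set edge}) : Prop := forall u v, connect (adj E) u v.

Definition cyc_edges (c : seq 'I_n) : {set edge} :=
  [set nedge p.1 p.2 | p in zip c (rot 1 c)].

Definition is_cycle (E : {set edge}) (c : seq 'I_n) : Prop :=
  [/\ (3 <= size c)%N, uniq c & cyc_edges c \subset E].

(* the unique cycle of E is c: c is a cycle, and every cycle of E has the
   same edge set as c (i.e. is c up to rotation/reversal) *)
Definition unique_cycle (E : {set edge}) (c : seq 'I_n) : Prop :=
  is_cycle E c /\ forall c', is_cycle E c' -> cyc_edges c' = cyc_edges c.

Definition other (v : 'I_n) (e : edge) : 'I_n := if e.1 == v then e.2 else e.1.

Definition incident (v : 'I_n) (e : edge) : bool := (e.1 == v) || (e.2 == v).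

(* position of j in the sequence i-1, i-2, ..., 1, n, n-1, ..., i+1
   (clockwise order at i) *)
Definition cwpos (i j : 'I_n) : nat := ((i + n - j) %% n)%N.

Definition clockwise_order (T : {set edge}) (s : seq edge) : Prop :=
  perm_eq s (enum T) /\
  forall s1 e s2 f s3 (v : 'I_n), s = s1 ++ e :: s2 ++ f :: s3 ->
    incident v e -> incident v f -> (cwpos v (other v e) < cwpos v (other v f))%N.

End Graphs.

Definition xprod (n : nat) (A : algType rat) (x : 'I_n -> 'I_n -> A)
    (s : seq ('I_n * 'I_n)) : A :=
  (\prod_(e <- s) x e.1 e.2)%R.

(* Main.v *)
Require Import Defs.
From HB Require Import structures.
From mathcomp Require Import all_boot all_order all_algebra.
From mathcomp Require Import zify.
Set Implicit Arguments. Unset Strict Implicit. Unset Printing Implicit Defensive.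

Section Basic.
Variable n : nat.
Implicit Types (u v w y : 'I_n) (e f : 'I_n * 'I_n).

Lemma cwE v y : cwpos v y = if (y <= v)%N then (v - y)%N else (v + n - y)%N.
Proof.
rewrite /cwpos; case: leqP => h.
  have -> : (v + n - y = (v - y) + n)%N by lia.
  by rewrite modnDr modn_small //; have := ltn_ord v; lia.
by rewrite modn_small //; have := ltn_ord y; lia.
Qed.

Lemma cw_inj v y y' : cwpos v y = cwpos v y' -> y = y'.
Proof.
rewrite !cwE => h; apply: val_inj => /=.
have := ltn_ord y; have := ltn_ord y'; have := ltn_ord v.
move: h; case: (leqP y v); case: (leqP y' v); lia.
Qed.

Lemma nedgeC u v : nedge u v = nedge v u.
Proof.
rewrite /nedge; case: (ltngtP u v) => h //.
by rewrite (val_inj h).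
Qed.

Lemma incident_nedge y u v : incident y (nedge u v) = (u == y) || (v == y).
Proof. by rewrite /nedge /incident; case: ltnP => //= _; rewrite orbC. Qed.

Lemma wf_nedge e : (e.1 < e.2)%N -> e = nedge e.1 e.2.
Proof. by case: e => a b /= h; rewrite /nedge h. Qed.

Lemma other_nedge u v : u != v -> other u (nedge u v) = v.
Proof.
rewrite /other /nedge => /negbTE h; case: ltnP => _ /=; first by rewrite eqxx.
by rewrite eq_sym h.
Qed.

Lemma wf_other y e : (e.1 < e.2)%N -> incident y e ->
  e = nedge y (other y e) /\ other y e != y.
Proof.
case: e => a b /= h; rewrite /incident /other /= => /orP[] /eqP <-; rewrite ?eqxx.
- split; last by apply/eqP => /(congr1 val) /=; lia.
  by rewrite /nedge h.
- have -> : (a == b) = false by apply/eqP => /(congr1 val) /=; lia.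
  split; last by apply/eqP => /(congr1 val) /=; lia.
  by rewrite /nedge ltnNge (ltnW h).
Qed.

End Basic.

Definition Rb n (e f : 'I_n * 'I_n) : bool :=
  [forall v : 'I_n, incident v e ==> incident v f ==>
     (cwpos v (other v e) < cwpos v (other v f))%N].

Lemma cw_pairwise n (T : {set 'I_n * 'I_n}) s : clockwise_order T s -> pairwise (@Rb n) s.
Proof.
case=> _; elim: s => [|a s IH] H //=.
apply/andP; split.
  apply/allP => f fs; case/splitPr: fs H => s2 s3 H.
  apply/forallP => v; apply/implyP => h1; apply/implyP => h2.
  exact: (H [::] a s2 f s3 v).
apply: IH => s1 e s2 f s3 v Hs.
by apply: (H (a :: s1) e s2 f s3 v); rewrite Hs.
Qed.

Section Alg.
Variables (n : nat) (A : algType rat) (x : 'I_n -> 'I_n -> A).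
Hypothesis Hcomm : forall i j k l : 'I_n, uniq [:: i; j; k; l] ->
             (x i j * x k l = x k l * x i j)%R.

Definition wfe (e : 'I_n * 'I_n) : bool := (e.1 < e.2)%N.

Lemma Rb_comm e f : wfe e -> wfe f -> Rb e f -> Rb f e ->
  (x e.1 e.2 * x f.1 f.2 = x f.1 f.2 * x e.1 e.2)%R.
Proof.
case: e => a b; case: f => c d; rewrite /wfe /= => hab hcd /forallP h1 /forallP h2.
apply: Hcomm.
have ns : forall v, incident v (a, b) -> incident v (c, d) -> False.
  move=> v i1 i2; move: (h1 v) (h2 v); rewrite i1 i2 /=.
  by move=> h h3; have := ltn_trans h h3; rewrite ltnn.
have neq : forall u v : 'I_n, (val u != val v) -> u != v.
  by move=> u v; apply: contra => /eqP ->.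
have ab : a != b by apply: neq; rewrite neq_ltn hab.
have cd : c != d by apply: neq; rewrite neq_ltn hcd.
have ac : a != c by apply/eqP => h; apply: (ns a); rewrite /incident /= ?h eqxx ?orbT.
have ad : a != d by apply/eqP => h; apply: (ns a); rewrite /incident /= ?h eqxx ?orbT.
have bc : b != c by apply/eqP => h; apply: (ns b); rewrite /incident /= ?h eqxx ?orbT.
have bd : b != d by apply/eqP => h; apply: (ns b); rewrite /incident /= ?h eqxx ?orbT.
by rewrite /= !inE !negb_or ab ac ad bc bd cd.
Qed.

End Alg.

Section Alg2.
Variables (n : nat) (A : algType rat) (x : 'I_n -> 'I_n -> A).
Hypothesis Hcomm : forall i j k l : 'I_n, uniq [:: i; j; k; l] ->
             (x i j * x k l = x k l * x i j)%R.

Lemma xprod_cons e t : xprod x (e :: t) = (x e.1 e.2 * xprod x t)%R.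
Proof. by rewrite /xprod big_cons. Qed.

Lemma xprod_cat t1 t2 : xprod x (t1 ++ t2) = (xprod x t1 * xprod x t2)%R.
Proof. by rewrite /xprod big_cat. Qed.

Lemma comm_prod e t : (forall f, f \in t -> x e.1 e.2 * x f.1 f.2 = x f.1 f.2 * x e.1 e.2)%R ->
  (x e.1 e.2 * xprod x t = xprod x t * x e.1 e.2)%R.
Proof.
elim: t => [|f t IH] H; first by rewrite /xprod big_nil GRing.mulr1 GRing.mul1r.
rewrite xprod_cons GRing.mulrA H ?mem_head // -!GRing.mulrA IH //.
by move=> g gt; apply: H; rewrite inE gt orbT.
Qed.

Lemma xprod_perm s t : uniq s -> perm_eq s t -> pairwise (@Rb n) s -> pairwise (@Rb n) t ->
  all (@wfe n) s -> xprod x s = xprod x t.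
Proof.
elim: s t => [|e s IH] t us pst ps pt ws.
  by move: pst; rewrite perm_sym => /perm_nilP ->.
have et : e \in t by rewrite -(perm_mem pst) mem_head.
case/splitPr: et pst pt => t1 t2 pst pt.
have ut : uniq (t1 ++ e :: t2) by rewrite -(perm_uniq pst).
move: (us) (ps) (ws); rewrite /= => /andP[es us'] /andP[allR ps'] /andP[we ws'].
have pst' : perm_eq s (t1 ++ t2).
  by rewrite -(perm_cons e) (perm_trans pst) // -cat1s perm_catCA.
rewrite [RHS]xprod_cat [xprod x (e :: t2)]xprod_cons GRing.mulrA -comm_prod; last first.
  move=> f ft1; apply: Rb_comm => //.
  - by apply: (allP ws); rewrite (perm_mem pst) mem_cat ft1.
  - have fs : f \in s.
      have : f \in e :: s by rewrite (perm_mem pst) mem_cat ft1.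
      rewrite inE => /orP[/eqP fe|] //.
      by move: ut; rewrite cat_uniq /= -fe ft1 /= andbF.
    exact: (allP allR).
  - move: pt; rewrite pairwise_cat => /and3P[/allrelP h _ _].
    by apply: h => //; rewrite mem_head.
rewrite -GRing.mulrA -xprod_cat xprod_cons; congr (_ * _)%R.
apply: IH => //.
move: pt; rewrite !pairwise_cat pairwise_cons allrel_consr => /and3P[/andP[_ ->] -> /andP[_ ->]].
by [].
Qed.

End Alg2.

Section Cyc.
Variables (n m : nat) (i : nat -> 'I_n).
Hypothesis Hinc : forall a b, (1 <= a)%N -> (a < b)%N -> (b <= m)%N -> (i a < i b)%N.
Variable E : {set 'I_n * 'I_n}.
Hypothesis Hwf : wf_edges E.
Hypothesis Hnc : noncrossing E.
Hypothesis Hcyc : unique_cycle E [seq i k | k <- iota 1 m].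

Definition ge l := (i l, i l.+1).
Definition f0 := (i 1, i m).
Definition Cset := cyc_edges [seq i k | k <- iota 1 m].
Definition D := E :\: Cset.
Definition nx k := if k == m then 1%N else k.+1.
Definition pv k := if k == 1%N then m else k.-1.

Lemma m3 : (3 <= m)%N.
Proof. by case: Hcyc => [[]]; rewrite size_map size_iota. Qed.

Lemma ile a b : (1 <= a)%N -> (a <= b)%N -> (b <= m)%N -> (i a <= i b)%N.
Proof. move=> h1 h2 h3; case: (ltngtP a b) h2 => // [h|h] _; [exact/ltnW/Hinc| by rewrite h]. Qed.

Lemma iinj a b : (1 <= a <= m)%N -> (1 <= b <= m)%N -> i a = i b -> a = b.
Proof.
move=> /andP[a1 am] /andP[b1 bm] h; case: (ltngtP a b) => // hab.
- by have := Hinc a1 hab bm; rewrite h ltnn.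
- by have := Hinc b1 hab am; rewrite h ltnn.
Qed.

Lemma zip_iota a b y :
  zip [seq i k | k <- iota a b.+1] (rcons [seq i k | k <- iota a.+1 b] y) =
  rcons [seq (i l, i l.+1) | l <- iota a b] (i (a + b), y).
Proof.
elim: b a => [|b IH] a; first by rewrite addn0.
by rewrite [iota a _]/= [iota a.+1 _]/= /= IH addSnnS.
Qed.

Lemma Cset_zip : Cset = [set nedge p.1 p.2 | p in
   rcons [seq (i l, i l.+1) | l <- iota 1 m.-1] (i m, i 1)].
Proof.
have hm := m3; rewrite /Cset /cyc_edges.
case em : m hm => [|m'] // _.
rewrite [iota 1 _]/= [map _ (_ :: _)]/= rot1_cons -zip_iota.
by [].
Qed.

Lemma nedge_ge l : (1 <= l < m)%N -> nedge (i l) (i l.+1) = ge l.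
Proof. by move=> /andP[h1 h2]; rewrite /nedge Hinc. Qed.

Lemma nedge_f0 : nedge (i m) (i 1) = f0.
Proof.
have hm := m3; rewrite /nedge ltnNge ltnW //; apply: Hinc => //; lia.
Qed.

Lemma CsetP e : reflect (e = f0 \/ exists2 l, (1 <= l < m)%N & e = ge l) (e \in Cset).
Proof.
have hm := m3; rewrite Cset_zip; apply: (iffP imsetP).
- case=> p; rewrite mem_rcons inE => /orP[/eqP -> | /mapP[l]].
    by move=> ->; left; rewrite nedge_f0.
  rewrite mem_iota => hl -> ->; right; exists l; first by lia.
  by rewrite nedge_ge //; lia.
- case=> [->|[l hl ->]].
    by exists (i m, i 1); rewrite ?nedge_f0 // mem_rcons mem_head.
  exists (i l, i l.+1); last by rewrite nedge_ge.
  rewrite mem_rcons inE; apply/orP; right; apply/mapP; exists l => //.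
  by rewrite mem_iota; lia.
Qed.

Lemma CsetE : Cset \subset E.
Proof. by case: Hcyc => [[]]. Qed.

Lemma DE e : e \in D -> e \in E.
Proof. by rewrite inE => /andP[]. Qed.

Lemma DC e : e \in D -> e \notin Cset.
Proof. by rewrite inE => /andP[]. Qed.

Lemma cwL (v y : 'I_n) : (y <= v)%N -> cwpos v y = (v - y)%N.
Proof. by rewrite cwE => ->. Qed.
Lemma cwR (v y : 'I_n) : (v < y)%N -> cwpos v y = (v + n - y)%N.
Proof. by move=> h; rewrite cwE leqNgt h. Qed.

Lemma cw_cyc_le k l : (1 <= k <= m)%N -> (1 <= l <= m)%N -> l != k ->
  (cwpos (i k) (i l) <= cwpos (i k) (i (nx k)))%N.
Proof.
move=> /andP[k1 km] /andP[l1 lm] lk; have hm := m3; rewrite /nx.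
case: eqP => [ekm|nkm].
  subst k; have h1 : (l < m)%N by rewrite ltn_neqAle lk.
  have := Hinc l1 h1 (leqnn m); have := ile (leqnn 1) l1 lm => a b.
  rewrite !cwL; try lia.
have km' : (k < m)%N by rewrite ltn_neqAle km andbT; apply/eqP.
have := ltn_ord (i k.+1); have := ltn_ord (i k) => o1 o2.
have hk := Hinc k1 (ltnSn k) km'.
case: (ltngtP l k) => [lk'|lk'|/eqP]; last by rewrite (negbTE lk).
  have := Hinc l1 lk' km => a; rewrite cwL ?cwR //; lia.
have := @ile k.+1 l isT lk' lm => a.
rewrite (@cwR _ (i l)) ?cwR //; lia.
Qed.

Lemma cw_pv_lt k : (1 <= k <= m)%N ->
  (cwpos (i k) (i (pv k)) < cwpos (i k) (i (nx k)))%N.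
Proof.
move=> /andP[k1 km]; have hm := m3; rewrite /pv /nx.
have := ltn_ord (i 1); have := ltn_ord (i k); have := ltn_ord (i m) => o1 o2 o3.
case: (k =P m) => [ekm|nkm].
  subst k; rewrite (_ : m == 1 = false); last by apply/eqP; lia.
  have a : (i 1 < i m.-1)%N by apply: Hinc; lia.
  have b : (i m.-1 < i m)%N by apply: Hinc; lia.
  rewrite !cwL; lia.
have km' : (k < m)%N by rewrite ltn_neqAle km andbT; apply/eqP.
have hk := Hinc k1 (ltnSn k) km'.
case: (k =P 1%N) => [ek1|nk1].
  subst k; have a : (i 1 < i m)%N by apply: Hinc; lia.
  have b : (i 2 < i m)%N by apply: Hinc; lia.
  rewrite !cwR //; lia.
have a : (i k.-1 < i k)%N by apply: Hinc; lia.
have := ltn_ord (i k.+1) => o4; rewrite cwL ?cwR //; lia.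
Qed.

Lemma zip_path (r : rel 'I_n) y p z : path r y p -> r (last y p) z ->
  all (fun q => r q.1 q.2) (zip (y :: p) (rcons p z)).
Proof.
elim: p y => [|a p IH] y /=; first by rewrite andbT.
by move=> /andP[-> hp] hl; rewrite IH.
Qed.

Lemma newcycle y p : path (adj E) y p -> uniq (y :: p) -> (2 <= size p)%N ->
  adj E (last y p) y -> nedge y (head y p) \notin Cset -> False.
Proof.
move=> hp hu hs hl hn.
have ic : is_cycle E (y :: p).
  split => //.
  apply/subsetP => e /imsetP[q]; rewrite rot1_cons => qin ->.
  by have := allP (zip_path hp hl) q qin.
case: Hcyc => _ /(_ _ ic) eqc.
move: hn; rewrite /Cset -eqc; clear ic eqc; case: p hp hu hs hl => [|a p] //= _ _ _ _.
by rewrite /cyc_edges rot1_cons; move/negP; apply; apply/imsetP; exists (y, a); rewrite /= ?mem_head.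
Qed.

Lemma path_cyc a b : (1 <= a)%N -> (a + b <= m)%N ->
  path (adj E) (i a) [seq i k | k <- iota a.+1 b].
Proof.
elim: b a => [|b IH] a a1 ab //=.
rewrite IH //; last by lia.
rewrite andbT /adj nedge_ge; last by lia.
apply: (subsetP CsetE); apply/CsetP; right; exists a => //; lia.
Qed.

Lemma last_iota y a b : last y [seq i k | k <- iota a b.+1] = i (a + b).
Proof.
elim: b a y => [|b IH] a y /=; first by rewrite addn0.
by have := IH a.+1 (i a); rewrite /= => ->; rewrite addSnnS.
Qed.

Lemma nochord d k l : d \in D -> d = nedge (i k) (i l) ->
  (1 <= k <= m)%N -> (1 <= l <= m)%N -> False.
Proof.
have hm := m3.
wlog kl : k l / (k <= l)%N.
  move=> H dD dkl hk hl; case: (leqP k l) => h; first exact: (H k l).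
  by apply: (H l k) => //; [lia | rewrite nedgeC].
move=> dD ed /andP[k1 km] /andP[l1 lm]; subst d.
have dE := DE dD; have dC := DC dD.
case: (ltngtP k l) kl => // [klt|ekl] _; last first.
  by subst l; have := Hwf dE; rewrite /nedge ltnn /= ltnn.
case: (l =P k.+1) => [elk|nlk].
  by subst l; move: dC; rewrite nedge_ge ?km //; [move/CsetP; apply; right; exists k => //; lia|lia].
case: (k =P 1%N) => [ek1|nk1]; case: (l =P m) => [elm|nlm].
- by subst k l; move: dC; rewrite nedgeC nedge_f0; move/CsetP; apply; left.
- apply: (@newcycle (i l) [seq i k | k <- iota k (l - k)]).
  + have -> : (l - k = (l - k - 1).+1)%N by lia.
    rewrite [iota _ _]/= [map _ _]/= /= path_cyc ?andbT; [by rewrite /adj nedgeC | lia | lia].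
  + change (uniq (map i (l :: iota k (l - k)))).
    rewrite (map_inj_in_uniq (f := i)).
      by rewrite /= iota_uniq mem_iota andbT; lia.
    move=> a b; rewrite !inE !mem_iota => ha hb; apply: iinj; lia.
  + by rewrite size_map size_iota; lia.
  + have -> : (l - k = (l - k - 1).+1)%N by lia.
    rewrite last_iota /adj (_ : (k + (l - k - 1) = l.-1)%N); last by lia.
    have -> : l = (l.-1).+1 by lia.
    rewrite nedge_ge; last by lia.
    apply: (subsetP CsetE); apply/CsetP; right; exists l.-1 => //; lia.
  + have -> : (l - k = (l - k - 1).+1)%N by lia.
    by rewrite /= nedgeC.
- apply: (@newcycle (i l) [seq i k | k <- iota k (l - k)]).
  + have -> : (l - k = (l - k - 1).+1)%N by lia.
    rewrite [iota _ _]/= [map _ _]/= /= path_cyc ?andbT; [by rewrite /adj nedgeC | lia | lia].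
  + have -> : i l :: [seq i k | k <- iota k (l - k)] = map i (l :: iota k (l - k)) by [].
    rewrite (map_inj_in_uniq (f := i)).
      by rewrite /= iota_uniq mem_iota andbT; lia.
    move=> a b; rewrite !inE !mem_iota => ha hb; apply: iinj; lia.
  + by rewrite size_map size_iota; lia.
  + have -> : (l - k = (l - k - 1).+1)%N by lia.
    rewrite last_iota /adj (_ : (k + (l - k - 1) = l.-1)%N); last by lia.
    have -> : l = (l.-1).+1 by lia.
    rewrite nedge_ge; last by lia.
    apply: (subsetP CsetE); apply/CsetP; right; exists l.-1 => //; lia.
  + have -> : (l - k = (l - k - 1).+1)%N by lia.
    by rewrite /= nedgeC.
- apply: (@newcycle (i l) [seq i k | k <- iota k (l - k)]).
  + have -> : (l - k = (l - k - 1).+1)%N by lia.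
    rewrite [iota _ _]/= [map _ _]/= /= path_cyc ?andbT; [by rewrite /adj nedgeC | lia | lia].
  + have -> : i l :: [seq i k | k <- iota k (l - k)] = map i (l :: iota k (l - k)) by [].
    rewrite (map_inj_in_uniq (f := i)).
      by rewrite /= iota_uniq mem_iota andbT; lia.
    move=> a b; rewrite !inE !mem_iota => ha hb; apply: iinj; lia.
  + by rewrite size_map size_iota; lia.
  + have -> : (l - k = (l - k - 1).+1)%N by lia.
    rewrite last_iota /adj (_ : (k + (l - k - 1) = l.-1)%N); last by lia.
    have -> : l = (l.-1).+1 by lia.
    rewrite nedge_ge; last by lia.
    apply: (subsetP CsetE); apply/CsetP; right; exists l.-1 => //; lia.
  + have -> : (l - k = (l - k - 1).+1)%N by lia.
    by rewrite /= nedgeC.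
Qed.

Lemma cross_false (a b c d : 'I_n) : (a, b) \in E -> nedge c d \in E ->
  (a < c < b)%N -> ((d < a)%N || (b < d)%N) -> False.
Proof.
move=> e1 e2 h1 h2.
have H1 := Hnc e1 e2; have H2 := Hnc e2 e1.
move: H1 H2; rewrite /nedge; case: (ltnP c d) => h /= H1 H2.
- by apply: H1; split => /=; lia.
- by apply: H2; split => /=; lia.
Qed.

Lemma cw_cross (v p q r : 'I_n) : nedge v q \in E -> nedge p r \in E ->
  p != v -> q != v -> r != v ->
  (cwpos v p < cwpos v q)%N -> (cwpos v q < cwpos v r)%N -> False.
Proof.
move=> e1 e2 /eqP pv /eqP qv /eqP rv.
have pv' : (p : nat) <> v by move=> h; apply: pv; apply: val_inj.
have qv' : (q : nat) <> v by move=> h; apply: qv; apply: val_inj.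
have rv' : (r : nat) <> v by move=> h; apply: rv; apply: val_inj.
have := ltn_ord p; have := ltn_ord q; have := ltn_ord r; have := ltn_ord v.
rewrite !cwE; case: (leqP q v) => hq.
  have e1' : (q, v) \in E by move: e1; rewrite nedgeC /nedge ifT //; lia.
  move=> o1 o2 o3 o4 h1 h2; apply: (cross_false e1' e2); move: h1 h2;
  case: (leqP p v); case: (leqP r v); lia.
have e1' : (v, q) \in E by move: e1; rewrite /nedge ifT //.
rewrite nedgeC in e2.
move=> o1 o2 o3 o4 h1 h2; apply: (cross_false e1' e2); move: h1 h2;
case: (leqP p v); case: (leqP r v); lia.
Qed.

Lemma nx_range k : (1 <= k <= m)%N -> (1 <= nx k <= m)%N.
Proof. have := m3; rewrite /nx; case: (k =P m); lia. Qed.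
Lemma pv_range k : (1 <= k <= m)%N -> (1 <= pv k <= m)%N.
Proof. have := m3; rewrite /pv; case: (k =P 1%N); lia. Qed.
Lemma nx_neq k : (1 <= k <= m)%N -> nx k != k.
Proof. have := m3; rewrite /nx; case: (k =P m); lia. Qed.
Lemma pv_neq k : (1 <= k <= m)%N -> pv k != k.
Proof. have := m3; rewrite /pv; case: (k =P 1%N); lia. Qed.
Lemma pv_nx k : (1 <= k <= m)%N -> pv k != nx k.
Proof. have := m3; rewrite /pv /nx; case: (k =P m); case: (k =P 1%N); lia. Qed.

Lemma i_neq a b : (1 <= a <= m)%N -> (1 <= b <= m)%N -> a != b -> i a != i b.
Proof. by move=> ha hb; apply: contra => /eqP /(iinj ha hb) ->. Qed.

Lemma nedge_nx k : (1 <= k <= m)%N -> nedge (i k) (i (nx k)) \in Cset.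
Proof.
move=> hk; rewrite /nx; case: eqP => [->|h].
  by rewrite nedge_f0; apply/CsetP; left.
rewrite nedge_ge; last by lia.
by apply/CsetP; right; exists k => //; lia.
Qed.

Definition adjD : rel 'I_n := fun u v => nedge u v \in D.

Lemma bridge k : (1 <= k <= m)%N -> connect adjD (i k) (i (nx k)) -> False.
Proof.
move=> hk /connectP[p hp hl].
case: (shortenP hp) hl => p' hp' hu _ hl.
have nk : i (nx k) != i k by apply: i_neq => //; [exact: nx_range | exact: nx_neq].
case: p' hp' hu hl => [|a [|b p']] hp' hu /= hl.
- by move: nk; rewrite hl eqxx.
- by move: hp'; rewrite /= andbT -hl /adjD => /DC; rewrite nedge_nx.
- apply: (@newcycle (i k) [:: a, b & p']) => //.
  + by apply: sub_path hp' => u v; rewrite /adjD /adj => /DE.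
  + by rewrite /= -hl /adj nedgeC; apply: (subsetP CsetE); apply: nedge_nx.
  + by move: hp' => /= /andP[/DC].
Qed.

Lemma neq_nat (u v : 'I_n) : u != v -> (u : nat) != v.
Proof. by apply: contra => /eqP h; apply/eqP; apply: val_inj. Qed.

Lemma find_gap (w : 'I_n) : (i 1 < w < i m)%N -> (forall l, (1 <= l <= m)%N -> w != i l) ->
  exists2 l, (1 <= l < m)%N & (i l < w < i l.+1)%N.
Proof.
move=> /andP[h1 h2] hw.
suff H : forall t, (1 <= t <= m)%N -> (w < i t)%N -> exists2 l, (1 <= l < t)%N & (i l < w < i l.+1)%N.
  have hm : (1 <= m <= m)%N by have := m3; lia.
  by have [l hl hl'] := H m hm h2; exists l.
elim=> [|t IH] // ht hwt.
case: (posnP t) => [t0|tpos]; first by subst t; lia.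
case: (ltnP w (i t)) => h.
  have ht' : (1 <= t <= m)%N by lia.
  by have [l hl hl'] := IH ht' h; exists l => //; lia.
have ne : (w : nat) != i t by apply: neq_nat; apply: hw; lia.
by exists t; lia.
Qed.

Lemma loc k (w : 'I_n) : (1 <= k <= m)%N -> nedge (i k) w \in D -> w != i k ->
  (cwpos (i k) (i (pv k)) < cwpos (i k) w)%N -> (cwpos (i k) (i (nx k)) < cwpos (i k) w)%N.
Proof.
move=> hk dD wk hpv; rewrite ltnNge; apply/negP => hle.
have hm := m3.
have wnb : w != i (nx k).
  by apply: contraTneq (DC dD) => ->; rewrite negbK nedge_nx.
have wnc : forall l, (1 <= l <= m)%N -> w != i l.
  by move=> l hl; apply/eqP => ewl; apply: (nochord dD (_ : _ = nedge (i k) (i l))) => //; rewrite ewl.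
have hlt : (cwpos (i k) w < cwpos (i k) (i (nx k)))%N.
  rewrite ltn_neqAle hle andbT; apply: contra wnb => /eqP h; apply/eqP; exact: cw_inj h.
have dE := DE dD.
have f0E : (i 1, i m) \in E by apply: (subsetP CsetE); apply/CsetP; left.
have o1 := ltn_ord w; have o2 := ltn_ord (i k); have o3 := ltn_ord (i m).
have i1m : (i 1 < i m)%N by apply: Hinc => //; lia.
have i1k : (i 1 <= i k)%N by apply: ile; lia.
have ikm : (i k <= i m)%N by apply: ile; lia.
have w1 : (w : nat) != i 1 by apply: neq_nat; apply: wnc; lia.
have wm : (w : nat) != i m by apply: neq_nat; apply: wnc; lia.
have wk' := neq_nat wk.
case: (boolP ((w < i 1) || (i m < w))%N) => hout.
  case: (k =P 1%N) => [ek1|nk1].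
    subst k; move: hpv; rewrite /pv eqxx !cwE; move: hout.
    by case: (leqP (i m) (i 1)); case: (leqP w (i 1)); lia.
  case: (k =P m) => [ekm|nkm].
    subst k; move: hlt; rewrite /nx eqxx !cwE; move: hout.
    by case: (leqP (i 1) (i m)); case: (leqP w (i m)); lia.
  apply: (cross_false f0E dE) => //.
  apply/andP; split; apply: Hinc; lia.
have [|l hl /andP[hl1 hl2]] := find_gap (w := w) _ wnc; first by lia.
have il := ltn_ord (i l.+1).
case: (k =P l) => [ekl|nkl].
  subst l; move: hlt; rewrite /nx (_ : (k == m) = false); last by apply/eqP; lia.
  have hk1 : (i k < i k.+1)%N by apply: Hinc; lia.
  rewrite !cwR; lia.
case: (k =P l.+1) => [ekl|nkl1].
  subst k; move: hpv; rewrite /pv (_ : (l.+1 == 1)%N = false) /=; last by apply/eqP; lia.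
  have hk1 : (i l < i l.+1)%N by apply: Hinc; lia.
  rewrite !cwL; lia.
have gE : (i l, i l.+1) \in E.
  by apply: (subsetP CsetE); apply/CsetP; right; exists l.
rewrite nedgeC in dE.
apply: (cross_false gE dE); first by lia.
case: (ltngtP k l) => h.
- by apply/orP; left; apply: Hinc; lia.
- apply/orP; right; apply: Hinc; lia.
- by move: nkl; rewrite h.
Qed.

Lemma wfE e : e \in E -> (e.1 < e.2)%N.
Proof. exact: Hwf. Qed.

Lemma incident_other (u : 'I_n) (e : 'I_n * 'I_n) : (e.1 < e.2)%N -> incident u e -> incident (other u e) e.
Proof.
case: e => a b /= h; rewrite {1}/incident /= => /orP[] /eqP <-;
  rewrite /other /incident /= ?eqxx ?orbT //.
by case: (a =P b) => _; rewrite ?eqxx ?orbT.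
Qed.

Lemma incident2 (u y : 'I_n) (e : 'I_n * 'I_n) : (e.1 < e.2)%N -> incident u e -> incident y e -> y = u \/ y = other u e.
Proof.
case: e => a b /= h; rewrite /incident /other /=.
by move=> /orP[] /eqP <- /orP[] /eqP <-; rewrite ?eqxx; auto; case: eqP; auto.
Qed.

Lemma cyc_vertex (f : 'I_n * 'I_n) (u : 'I_n) : f \in Cset -> incident u f ->
  exists2 k, (1 <= k <= m)%N & u = i k /\ (other u f = i (nx k) \/ other u f = i (pv k)).
Proof.
have hm := m3.
case/CsetP => [->|[l hl ->]]; rewrite /incident /other /= => /orP[] /eqP <-; rewrite ?eqxx.
- exists 1%N; first by lia.
  by split => //; right; rewrite /pv eqxx.
- exists m; first by lia.
  split => //; left; rewrite /nx eqxx.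
  by case: eqP => // /(iinj _ _) h; exfalso; have := h (_ : 1 <= m <= m)%N; lia.
- exists l; first by lia.
  by split => //; left; rewrite /nx (_ : (l == m) = false) //; apply/eqP; lia.
- exists l.+1; first by lia.
  split => //; right; rewrite /pv /=.
  have ne : i l != i l.+1 by apply: i_neq; lia.
  rewrite (negbTE ne); case: (l.+1 =P 1%N) => // h; lia.
Qed.

Definition step : rel ('I_n * 'I_n) := fun e f =>
  [&& e \in D, f \in E & [exists v : 'I_n, [&& incident v e, incident v f &
     (cwpos v (other v e) < cwpos v (other v f))%N]]].

Section NC.
Variable k : nat.
Hypothesis hk : (1 <= k <= m)%N.
Local Notation v := (i k).
Local Notation nb := (i (nx k)).
Definition Sk (u : 'I_n) := (u == v) || (cwpos v nb < cwpos v u)%N.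
Definition Inv e := (e \in D) &&
  [forall u : 'I_n, incident u e ==> (Sk u && connect adjD v u)].

Lemma Sk_cyc l : (1 <= l <= m)%N -> Sk (i l) -> l = k.
Proof.
move=> hl; rewrite /Sk; case: (l =P k) => // nlk.
have -> : (i l == v) = false by apply/negbTE/i_neq => //; apply/eqP.
by rewrite /= ltnNge cw_cyc_le //; apply/eqP.
Qed.

Lemma cw_cyc_other l : (1 <= l <= m)%N -> l != k -> (cwpos v (i l) <= cwpos v nb)%N.
Proof. by move=> hl nlk; apply: cw_cyc_le. Qed.

Lemma nc_main p e : Inv e -> path step e p -> last e p \in Cset -> False.
Proof.
elim: p e => [|f p IH] e /=.
  by move=> /andP[/DC /negP h _] _.
move=> /andP[eD /forallP ie] /andP[/and3P[_ fE /existsP[u /and3P[ue uf hcw]]] hp] hlast.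
have wfe := wfE (DE eD); have wff := wfE fE.
have /andP[Su cu] := implyP (ie u) ue.
have /andP[Sw cw] := implyP (ie (other u e)) (incident_other wfe ue).
have [_ wu] := wf_other wfe ue.
case: (boolP (f \in Cset)) => fC.
  have [l hl [eul hof]] := cyc_vertex fC uf.
  have elk : l = k by apply: Sk_cyc hl _; rewrite -eul.
  subst l.
  move: Sw; rewrite /Sk => /orP[/eqP h|Sw]; first by move: wu; rewrite h -eul eqxx.
  have : (cwpos v (other u f) <= cwpos v nb)%N.
    case: hof => ->; first by [].
    by apply: cw_cyc_other; [exact: pv_range | exact: pv_neq].
  by subst u; move: hcw; lia.
have fD : f \in D by rewrite inE fC fE.
apply: (IH f) => //; rewrite /Inv fD /=.
apply/forallP => y; apply/implyP => yf.
have [wff' wfu] := wf_other wff uf.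
case: (incident2 wff uf yf) => ->; first by rewrite Su cu.
set w' := other u f in hcw wff' wfu *.
have cw' : connect adjD v w'.
  by apply: (connect_trans cu); apply: connect1; rewrite /adjD -wff'.
rewrite cw' andbT /Sk.
case: (u =P v) => [euv|nuv].
  subst u; move: Sw; rewrite /Sk (negbTE wu) /= => Sw.
  by apply/orP; right; exact: ltn_trans Sw hcw.
case: (w' =P v) => [ew|nwv]; first by apply/orP; left; apply/eqP.
case: (w' =P nb) => [ewnb|nwnb].
  by exfalso; apply: (@bridge k) => //; rewrite -ewnb.
move: Su; rewrite /Sk; case: (u =P v) => // _ /= Su.
rewrite ltnNge; apply/negP => hle; exfalso.
have hlt : (cwpos v w' < cwpos v nb)%N.
  rewrite ltn_neqAle hle andbT; apply/eqP => /cw_inj; exact: nwnb.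
apply: (@cw_cross v w' nb u) => //.
- by apply: (subsetP CsetE); apply: nedge_nx.
- by rewrite nedgeC -wff'.
- by apply/eqP.
- by apply: i_neq; [exact: nx_range | by [] | exact: nx_neq].
- by apply/eqP.
Qed.

End NC.

Lemma nc0 (c d c' : 'I_n * 'I_n) (u : 'I_n) : c \in Cset -> d \in D ->
  incident u c -> incident u d ->
  (cwpos u (other u c) < cwpos u (other u d))%N ->
  connect step d c' -> c' \in Cset -> False.
Proof.
move=> cC dD uc ud hcw /connectP[p hp hl] c'C.
have [k hk [euk hoc]] := cyc_vertex cC uc; subst u.
have wfd := wfE (DE dD); have [ed wk] := wf_other wfd ud.
have Sw : Sk k (other (i k) d).
  apply/orP; right; case: hoc => hoc; rewrite hoc in hcw; first by [].
  by apply: loc => //; rewrite -ed.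
apply: (@nc_main k hk p d) => //; last by rewrite -hl.
rewrite /Inv dD /=; apply/forallP => y; apply/implyP => yd.
case: (incident2 wfd ud yd) => ->; first by rewrite /Sk eqxx connect0.
rewrite Sw /=; apply: connect1; by rewrite /adjD -ed.
Qed.

Definition Bs := [set d in D | [exists c in Cset, connect step d c]].
Definition As := [set d in D | d \notin Bs].

Lemma RbP (e f : 'I_n * 'I_n) : (forall u, incident u e -> incident u f ->
  (cwpos u (other u e) < cwpos u (other u f))%N) -> Rb e f.
Proof. by move=> H; apply/forallP => u; apply/implyP => h1; apply/implyP => h2; apply: H. Qed.

Lemma cw_tri (e f : 'I_n * 'I_n) u : (e.1 < e.2)%N -> (f.1 < f.2)%N -> incident u e -> incident u f ->
  e != f -> (cwpos u (other u e) < cwpos u (other u f))%N \/ (cwpos u (other u f) < cwpos u (other u e))%N.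
Proof.
move=> we wf ue uf nef.
case: (ltngtP (cwpos u (other u e)) (cwpos u (other u f))) => h; [by left|by right|].
move/cw_inj: h => h; have [e1 _] := wf_other we ue; have [f1 _] := wf_other wf uf.
by move: nef; rewrite e1 f1 h eqxx.
Qed.

Lemma RbBC b c : b \in Bs -> c \in Cset -> Rb b c.
Proof.
rewrite inE => /andP[bD /exists_inP[c' c'C hc]] cC; apply: RbP => u ub uc.
have wb := wfE (DE bD); have wc := wfE (subsetP CsetE _ cC).
have nbc : b != c by apply: contraTneq cC => <-; exact: DC.
case: (cw_tri wb wc ub uc nbc) => // h; exfalso.
exact: (nc0 cC bD uc ub h hc).
Qed.

Lemma RbCA c a : c \in Cset -> a \in As -> Rb c a.
Proof.
move=> cC; rewrite inE => /andP[aD aB]; apply: RbP => u uc ua.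
have wa := wfE (DE aD); have cE := subsetP CsetE _ cC; have wc := wfE cE.
have nac : a != c by apply: contraTneq cC => <-; exact: DC.
case: (cw_tri wa wc ua uc nac) => // h; exfalso.
move/negP: aB; apply; rewrite inE aD /=; apply/exists_inP; exists c => //.
apply: connect1; rewrite /step aD cE /=; apply/existsP; exists u; by rewrite ua uc h.
Qed.

Lemma RbBA b a : b \in Bs -> a \in As -> Rb b a.
Proof.
move=> bB; rewrite inE => /andP[aD aB]; apply: RbP => u ub ua.
have bD : b \in D by move: bB; rewrite inE => /andP[].
have wa := wfE (DE aD); have wb := wfE (DE bD).
have nab : a != b by apply: contraNneq aB => ->.
case: (cw_tri wa wb ua ub nab) => // h; exfalso.
move/negP: aB; apply; rewrite inE aD /=.
move: bB; rewrite inE => /andP[_ /exists_inP[c cC hc]]; apply/exists_inP; exists c => //.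
apply: connect_trans hc; apply: connect1; rewrite /step aD (DE bD) /=.
by apply/existsP; exists u; rewrite ua ub h.
Qed.

Lemma ieq a b : (1 <= a <= m)%N -> (1 <= b <= m)%N -> (i a == i b) = (a == b).
Proof. by move=> ha hb; apply/eqP/eqP => [/(iinj ha hb)|->]. Qed.

Lemma other1 (a b : 'I_n) : other a (a, b) = b.
Proof. by rewrite /other /= eqxx. Qed.
Lemma other2 (a b : 'I_n) : a != b -> other b (a, b) = a.
Proof. by move=> /negbTE h; rewrite /other /= h. Qed.

Lemma Rge l l' : (1 <= l < m)%N -> (1 <= l' < m)%N -> l != l' -> l != l'.+1 -> Rb (ge l) (ge l').
Proof.
move=> hl hl' n1 n2; apply: RbP => u; rewrite /incident /=.
case/orP => /eqP <-; rewrite !ieq; try lia.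
case/orP => /eqP el; last by exfalso; lia.
subst l'; rewrite /ge other2 ?other1; last by rewrite ieq; lia.
have hr : (1 <= l.+1 <= m)%N by lia.
have := cw_pv_lt hr.
rewrite /pv /nx (_ : (l.+1 == 1)%N = false); last by apply/eqP; lia.
by rewrite (_ : (l.+1 == m)%N = false) //; apply/eqP; lia.
Qed.

Lemma Rgef l : (1 < l < m)%N -> Rb (ge l) f0.
Proof.
move=> hl; have hm := m3; apply: RbP => u; rewrite /incident /=.
case/orP => /eqP <-; rewrite !ieq; try lia.
case/orP => /eqP el; first by exfalso; lia.
have ->: l = m.-1 by lia.
have em : m.-1.+1 = m by lia.
rewrite /ge em other2 ?other2; try by rewrite ieq; lia.
have hr : (1 <= m <= m)%N by lia.
have := cw_pv_lt hr.
have m1 : (m == 1)%N = false by apply/eqP; lia.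
by rewrite /pv /nx eqxx m1.
Qed.

Lemma Rfge l : (1 <= l < m.-1)%N -> Rb f0 (ge l).
Proof.
move=> hl; have hm := m3; apply: RbP => u; rewrite /incident /=.
case/orP => /eqP <-; rewrite !ieq; try lia.
  case/orP => /eqP el; last by exfalso; lia.
  subst l; rewrite other1 other1.
  have hr : (1 <= 1 <= m)%N by lia.
  have := cw_pv_lt hr.
  have m1 : (1 == m)%N = false by apply/eqP; lia.
  by rewrite /pv /nx eqxx m1.
Qed.

Definition cycseq j := if j == 1%N then [seq ge l | l <- iota 1 m.-1]
  else [seq ge l | l <- iota j (m - j)] ++ f0 :: [seq ge l | l <- iota 1 (j - 2)].
Definition rj j := if j == 1%N then f0 else ge j.-1.

Lemma ge_inj l l' : (1 <= l < m)%N -> (1 <= l' < m)%N -> ge l = ge l' -> l = l'.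
Proof. by move=> hl hl' [/iinj h _]; apply: h; lia. Qed.

Lemma ge_f0 l : (1 <= l < m)%N -> ge l != f0.
Proof.
move=> hl; have hm := m3; apply/eqP => -[h1 h2].
have e1 : l = 1%N by apply: (iinj _ _ h1); lia.
have e2 : l.+1 = m by apply: (iinj _ _ h2); lia.
lia.
Qed.

Lemma mem_ge a b l : (1 <= a)%N -> (a + b <= m)%N -> (1 <= l < m)%N ->
  (ge l \in [seq ge k | k <- iota a b]) = (a <= l < a + b)%N.
Proof.
move=> ha hab hl; apply/mapP/idP => [[l' hl' e]|h].
  move: hl'; rewrite mem_iota => hl'.
  have el : l = l' by apply: ge_inj e => //; lia.
  by subst; lia.
by exists l => //; rewrite mem_iota.
Qed.

Lemma pw_iota (r : rel nat) a b : (forall u v, (a <= u)%N -> (u < v)%N -> (v < a + b)%N -> r u v) ->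
  pairwise r (iota a b).
Proof.
elim: b a => [|b IH] a H //=; apply/andP; split.
  by apply/allP => v; rewrite mem_iota => hv; apply: H; lia.
by apply: IH => u v h1 h2 h3; apply: H; lia.
Qed.

Lemma cycseq_mem j e : (1 <= j <= m)%N -> (e \in cycseq j) = (e \in Cset) && (e != rj j).
Proof.
move=> hj; have hm := m3; rewrite /cycseq /rj.
case: (j =P 1%N) => [ej|nj].
  apply/mapP/andP => [[l hl ->]|[/CsetP [->|[l hl ->]] hne]].
  - move: hl; rewrite mem_iota => hl; split; first by apply/CsetP; right; exists l => //; lia.
    by rewrite ge_f0 //; lia.
  - by rewrite eqxx in hne.
  - by exists l => //; rewrite mem_iota; lia.
rewrite mem_cat inE; apply/idP/andP.
  case/or3P => [/mapP[l hl ->]|/eqP ->|/mapP[l hl ->]].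
  - move: hl; rewrite mem_iota => hl; split; first by apply/CsetP; right; exists l => //; lia.
    apply/eqP => /ge_inj h.
    have hl1 : (1 <= l < m)%N by lia.
    have hl2 : (1 <= j.-1 < m)%N by lia.
    by have := h hl1 hl2; lia.
  - split; first by apply/CsetP; left.
    by rewrite eq_sym ge_f0 //; lia.
  - move: hl; rewrite mem_iota => hl; split; first by apply/CsetP; right; exists l => //; lia.
    apply/eqP => /ge_inj h.
    have hl1 : (1 <= l < m)%N by lia.
    have hl2 : (1 <= j.-1 < m)%N by lia.
    by have := h hl1 hl2; lia.
case=> /CsetP [->|[l hl ->]] hne; first by rewrite eqxx orbT.
have hne' : l != j.-1 by apply: contra hne => /eqP ->.
case: (leqP j l) => hjl.
  by rewrite mem_ge //; lia.
by rewrite (mem_ge (b := j - 2)) //; lia.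
Qed.

Lemma cycseq_uniq j : (1 <= j <= m)%N -> uniq (cycseq j).
Proof.
move=> hj; have hm := m3; rewrite /cycseq.
have ui : forall a b, (1 <= a)%N -> (a + b <= m)%N -> uniq [seq ge k | k <- iota a b].
  move=> a b ha hab; rewrite map_inj_in_uniq ?iota_uniq // => u v.
  rewrite !mem_iota => hu hv e; apply: ge_inj e; lia.
case: (j =P 1%N) => [ej|nj]; first by apply: ui; lia.
have u1 : uniq [seq ge l | l <- iota j (m - j)] by apply: ui; lia.
have u3 : uniq [seq ge l | l <- iota 1 (j - 2)] by apply: ui; lia.
have nf1 : f0 \notin [seq ge l | l <- iota j (m - j)].
  apply/mapP => -[l]; rewrite mem_iota => hl /eqP; rewrite eq_sym.
  by apply/negP; apply: ge_f0; lia.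
have nf3 : f0 \notin [seq ge l | l <- iota 1 (j - 2)].
  apply/mapP => -[l]; rewrite mem_iota => hl /eqP; rewrite eq_sym.
  by apply/negP; apply: ge_f0; lia.
have nh : ~~ has (mem [seq ge l | l <- iota j (m - j)]) [seq ge l | l <- iota 1 (j - 2)].
  apply/hasPn => e /mapP[l]; rewrite mem_iota => hl ->.
  by rewrite /= mem_ge //; lia.
by rewrite cat_uniq /= u1 u3 negb_or (negbTE nf1) nf3 (negbTE nh).
Qed.

Lemma cycseq_pw j : (1 <= j <= m)%N -> pairwise (@Rb n) (cycseq j).
Proof.
move=> hj; have hm := m3; rewrite /cycseq.
case: (j =P 1%N) => [ej|nj].
  by rewrite pairwise_map; apply: pw_iota => u v h1 h2 h3; apply: Rge; lia.
rewrite pairwise_cat pairwise_cons; apply/and4P; split.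
- apply/allrelP => e e' /mapP[l]; rewrite mem_iota => hl -> /[!inE].
  case/orP => [/eqP ->|/mapP[l' hl' ->]]; first by apply: Rgef; lia.
  by move: hl'; rewrite mem_iota => hl'; apply: Rge; lia.
- by rewrite pairwise_map; apply: pw_iota => u v h1 h2 h3; apply: Rge; lia.
- by apply/allP => e /mapP[l]; rewrite mem_iota => hl ->; apply: Rfge; lia.
- by rewrite pairwise_map; apply: pw_iota => u v h1 h2 h3; apply: Rge; lia.
Qed.

End Cyc.
Import GRing.Theory.

Section CycAlg.
Variables (n : nat) (A : algType rat) (x : 'I_n -> 'I_n -> A).
Hypothesis Hanti : forall i j : 'I_n, i != j -> x i j = (- x j i)%R.
Hypothesis Hcomm : forall i j k l : 'I_n, uniq [:: i; j; k; l] ->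
             (x i j * x k l = x k l * x i j)%R.
Hypothesis Htri : forall i j k : 'I_n, uniq [:: i; j; k] ->
             (x i j * x j k + x j k * x k i + x k i * x i j = 0)%R.
Variables (m : nat) (i : nat -> 'I_n).
Hypothesis Hinc : forall a b, (1 <= a)%N -> (a < b)%N -> (b <= m)%N -> (i a < i b)%N.

Local Open Scope ring_scope.

Definition yy l := x (i l) (i l.+1).
Definition ww k := x (i 1) (i k).
Definition PP a b := \prod_(a <= l < b) yy l.

Lemma iinj' a b : (1 <= a <= m)%N -> (1 <= b <= m)%N -> i a = i b -> a = b.
Proof.
move=> /andP[a1 am] /andP[b1 bm] h; case: (ltngtP a b) => // hab.
- by have := Hinc a1 hab bm; rewrite h ltnn.
- by have := Hinc b1 hab am; rewrite h ltnn.
Qed.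

Lemma iuniq s : all (fun a => 1 <= a <= m)%N s -> uniq s -> uniq (map i s).
Proof.
move=> /allP hs us; rewrite map_inj_in_uniq // => a b ha hb; apply: iinj'; exact: hs.
Qed.

Lemma commP z a b : (forall l, (a <= l < b)%N -> GRing.comm z (yy l)) -> GRing.comm z (PP a b).
Proof. by move=> H; rewrite /PP big_nat_cond; apply: commr_prod => l /andP[hl _]; apply: H. Qed.

Lemma tri k : (2 <= k)%N -> (k < m)%N -> ww k.+1 * ww k = ww k * yy k - yy k * ww k.+1.
Proof.
move=> k2 km.
have U : uniq [:: i 1; i k; i k.+1].
  change (uniq (map i [:: 1; k; k.+1]%N)); apply: iuniq; rewrite /= ?inE; lia.
have H := Htri U.
rewrite (@Hanti (i k.+1) (i 1)) in H; last first.
  by apply/eqP => /iinj' h; have := h (_ : 1 <= k.+1 <= m)%N (_ : 1 <= 1 <= m)%N; lia.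
move: H; rewrite mulrN mulNr => /subr0_eq.
by rewrite /ww /yy => <-.
Qed.

Lemma key t : (t.+2 <= m)%N ->
  ww t.+2 * PP 1 t.+1 = PP 1 t.+2 - \sum_(2 <= j < t.+2) PP j t.+2 * ww t.+2 * PP 1 j.-1.
Proof.
elim: t => [|t IH] hm.
  by rewrite /PP big_geq // mulr1 big_nat1 big_geq // subr0.
set k := t.+2 in IH hm *.
have k2 : (2 <= k)%N by [].
have km : (k < m)%N by [].
have IH' := IH (ltnW hm).
have eP : PP 1 k = ww k * PP 1 k.-1 + \sum_(2 <= j < k) PP j k * ww k * PP 1 j.-1.
  by rewrite IH' subrK.
have c1 : forall j, (2 <= j)%N -> GRing.comm (ww k.+1) (PP j k).
  move=> j j2; apply: commP => l /andP[hl1 hl2]; apply: Hcomm.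
  change (uniq (map i [:: 1; k.+1; l; l.+1]%N)); apply: iuniq; rewrite /= ?inE; lia.
have c2 : forall j, (j <= k)%N -> GRing.comm (yy k) (PP 1 j.-1).
  move=> j jk; apply: commP => l /andP[hl1 hl2]; apply: Hcomm.
  change (uniq (map i [:: k; k.+1; l; l.+1]%N)); apply: iuniq; rewrite /= ?inE; lia.
have T := tri k2 km.
have ePk1 : PP 1 k.+1 = PP 1 k * yy k by rewrite /PP big_nat_recr.
have eS : \sum_(2 <= j < k.+1) PP j k.+1 * ww k.+1 * PP 1 j.-1 =
   \sum_(2 <= j < k) PP j k * yy k * ww k.+1 * PP 1 j.-1 + yy k * ww k.+1 * PP 1 k.-1.
  rewrite big_nat_recr //=; congr (_ + _).
    apply: eq_big_nat => j /andP[j2 jk].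
    by rewrite /PP big_nat_recr //=; lia.
  by rewrite /PP big_nat1.
have ha : ww k.+1 * (\sum_(2 <= j < k) PP j k * ww k * PP 1 j.-1) =
   (\sum_(2 <= j < k) PP j k * ww k * PP 1 j.-1) * yy k
   - \sum_(2 <= j < k) PP j k * yy k * ww k.+1 * PP 1 j.-1.
  rewrite mulr_sumr mulr_suml -sumrB; apply: eq_big_nat => j /andP[j2 jk].
  rewrite !mulrA (c1 j j2) -(mulrA _ (ww k.+1)) T mulrBr mulrBl.
  rewrite -!mulrA (c2 j (ltnW jk)); by rewrite !mulrA.
have hb : ww k.+1 * (ww k * PP 1 k.-1) = ww k * PP 1 k.-1 * yy k - yy k * ww k.+1 * PP 1 k.-1.
  by rewrite mulrA T mulrBl -!mulrA (c2 k (leqnn k)).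
rewrite eS ePk1 eP mulrDr ha hb mulrDl.
set a := ww k * PP 1 k.-1 * yy k; set b := yy k * ww k.+1 * PP 1 k.-1.
set S1 := (\sum_(2 <= j < k) _) * yy k; set S2 := \sum_(2 <= j < k) _.
by rewrite opprD addrACA (addrC (- S2)).
Qed.

End CycAlg.
Import GRing.Theory.

Section Main.
Variables (n : nat) (A : algType rat) (x : 'I_n -> 'I_n -> A).
Hypothesis Hanti : forall i j : 'I_n, i != j -> x i j = (- x j i)%R.
Hypothesis Hcomm : forall i j k l : 'I_n, uniq [:: i; j; k; l] ->
             (x i j * x k l = x k l * x i j)%R.
Hypothesis Htri : forall i j k : 'I_n, uniq [:: i; j; k] ->
             (x i j * x j k + x j k * x k i + x k i * x i j = 0)%R.
Variables (m : nat) (i : nat -> 'I_n).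
Hypothesis Hinc : forall a b, (1 <= a)%N -> (a < b)%N -> (b <= m)%N -> (i a < i b)%N.
Variable E : {set 'I_n * 'I_n}.
Hypotheses (Hwf : wf_edges E) (Hnc : noncrossing E).
Hypothesis Hcyc : unique_cycle E [seq i k | k <- iota 1 m].
Variable s : nat -> seq ('I_n * 'I_n).
Hypothesis Hs : forall j, (1 <= j)%N -> (j <= m)%N ->
          clockwise_order
            (E :\ (if j == 1%N then nedge (i 1%N) (i m) else nedge (i j.-1) (i j)))
            (s j).

Local Open Scope ring_scope.

Let B := Bs m i E.
Let As' := As m i E.
Let fB := filter (mem B) (s 1).
Let fA := filter (mem As') (s 1).

Lemma rem_edge j : (1 <= j <= m)%N ->
  (if j == 1%N then nedge (i 1%N) (i m) else nedge (i j.-1) (i j)) = rj m i j.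
Proof.
move=> hj; have hm := m3 Hcyc; rewrite /rj; case: (j =P 1%N) => [_|nj].
  by rewrite nedgeC (nedge_f0 Hinc Hcyc).
have -> : j = j.-1.+1 by lia.
by rewrite (nedge_ge Hinc) //= ; lia.
Qed.

Lemma rj_C j : (1 <= j <= m)%N -> rj m i j \in Cset m i.
Proof.
move=> hj; have hm := m3 Hcyc; rewrite /rj; case: (j =P 1%N) => [_|nj]; apply/(CsetP Hinc Hcyc).
  by left.
by right; exists j.-1 => //; lia.
Qed.

Lemma fact j : (1 <= j <= m)%N -> xprod x (s j) = xprod x fB * xprod x (cycseq m i j) * xprod x fA.
Proof.
move=> hj; have hj' := hj; move/andP: hj' => [j1 jm].
have h1 : (1 <= 1 <= m)%N by have := m3 Hcyc; lia.
have [ps _] := Hs j1 jm; have pw := cw_pairwise (Hs j1 jm).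
have [ps1 _] := Hs (leqnn 1) (andP h1).2; have pw1 := cw_pairwise (Hs (leqnn 1) (andP h1).2).
have us : uniq (s j) by rewrite (perm_uniq ps) enum_uniq.
have us1 : uniq (s 1) by rewrite (perm_uniq ps1) enum_uniq.
have msj : forall e : 'I_n * 'I_n, (e \in s j) = (e \in E) && (e != rj m i j).
  by move=> e; rewrite (perm_mem ps) mem_enum rem_edge // !inE andbC.
have ms1 : forall e : 'I_n * 'I_n, (e \in s 1) = (e \in E) && (e != rj m i 1).
  move=> e; rewrite (perm_mem ps1) mem_enum !inE andbC.
  by rewrite /rj eqxx nedgeC (nedge_f0 Hinc Hcyc).
have BD : forall e, e \in B -> e \in D m i E by move=> e; rewrite inE => /andP[].
have AD : forall e, e \in As' -> e \in D m i E by move=> e; rewrite inE => /andP[].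
have AB : forall e, e \in As' -> e \notin B by move=> e; rewrite inE => /andP[].
have CE : forall e, e \in Cset m i -> e \in E by move=> e; apply: (subsetP (CsetE Hcyc)).
have DnC : forall e, e \in D m i E -> e \notin Cset m i by move=> e; apply: DC.
have DE' : forall e, e \in D m i E -> e \in E by move=> e; apply: DE.
have rC := rj_C hj; have r1C := rj_C h1.
have mfB : forall e, (e \in fB) = (e \in B).
  move=> e; rewrite mem_filter ms1; apply/andP/idP => [[]//|eB]; split => //.
  apply/andP; split; first exact: DE' (BD _ eB).
  apply/eqP => er; move: (DnC _ (BD _ eB)); by rewrite er r1C.
have mfA : forall e, (e \in fA) = (e \in As').
  move=> e; rewrite mem_filter ms1; apply/andP/idP => [[]//|eA]; split => //.
  apply/andP; split; first exact: DE' (AD _ eA).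
  apply/eqP => er; move: (DnC _ (AD _ eA)); by rewrite er r1C.
set t := fB ++ cycseq m i j ++ fA.
have ut : uniq t.
  have hh1 : ~~ has (fun e => e \in fB) (cycseq m i j).
    apply/hasPn => e; rewrite (cycseq_mem Hinc Hcyc _ hj) => /andP[eC _].
    by rewrite mfB; apply/negP => /BD /DnC; rewrite eC.
  have hh2 : ~~ has (fun e => e \in fB) fA.
    by apply/hasPn => e; rewrite mfA mfB => /AB.
  have hh3 : ~~ has (fun e => e \in cycseq m i j) fA.
    apply/hasPn => e; rewrite mfA (cycseq_mem Hinc Hcyc _ hj) => /AD /DnC /negbTE ->.
    by [].
  rewrite /t cat_uniq cat_uniq (cycseq_uniq Hinc Hcyc hj) !filter_uniq //=.
  by rewrite has_cat negb_or hh1 hh2 hh3.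
have pst : perm_eq (s j) t.
  apply: uniq_perm => // e; rewrite msj !mem_cat mfB mfA (cycseq_mem Hinc Hcyc _ hj).
  case eC: (e \in Cset m i).
    rewrite (CE _ eC) /=.
    case eB: (e \in B); first by have := DnC _ (BD _ eB); rewrite eC.
    case eA: (e \in As'); first by have := DnC _ (AD _ eA); rewrite eC.
    by rewrite orbF.
  rewrite andFb /=.
  case eE: (e \in E) => /=; last first.
    by apply/esym/negbTE; rewrite negb_or; apply/andP; split; apply: contraFN eE;
      [move/BD/DE' | move/AD/DE'].
  have eD : e \in D m i E by rewrite inE eC eE.
  have -> : e != rj m i j by apply: contraFneq eC => ->.
  case eB: (e \in B) => //=; symmetry; rewrite inE eD /= eB.
  by [].
have wft : all (@wfe n) (s j) by apply/allP => e; rewrite msj => /andP[/Hwf].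
have pt : pairwise (@Rb n) t.
  rewrite /t !pairwise_cat allrel_catr; apply/and3P; split; first (apply/andP; split).
  - apply/allrelP => b c; rewrite mfB (cycseq_mem Hinc Hcyc _ hj) => bB /andP[cC _].
    exact: (RbBC Hinc Hwf Hnc Hcyc bB cC).
  - apply/allrelP => b a; rewrite mfB mfA => bB aA.
    exact: (RbBA Hwf bB aA).
  - exact: pairwise_filter pw1.
  - apply/and3P; split.
    + apply/allrelP => c a; rewrite mfA (cycseq_mem Hinc Hcyc _ hj) => /andP[cC _] aA.
      exact: (RbCA Hwf Hcyc cC aA).
    + exact: (cycseq_pw Hinc Hcyc hj).
    + exact: pairwise_filter pw1.
by rewrite (xprod_perm Hcomm (t := t)) // /t !xprod_cat mulrA.
Qed.

Lemma xprod_map a b : xprod x [seq ge i l | l <- iota a b] = \prod_(l <- iota a b) yy x i l.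
Proof. by rewrite /xprod big_map. Qed.

Lemma PPE a b : PP x i a b = \prod_(l <- iota a (b - a)) yy x i l.
Proof. by []. Qed.

Lemma prod_cyc j : (2 <= j <= m)%N ->
  xprod x (cycseq m i j) = PP x i j m * ww x i m * PP x i 1 j.-1.
Proof.
move=> hj; rewrite /cycseq (_ : (j == 1%N) = false); last by apply/eqP; lia.
rewrite xprod_cat xprod_cons !xprod_map !PPE mulrA /ww /=.
by rewrite (_ : (j.-1 - 1 = j - 2)%N) //; lia.
Qed.

Lemma prod_cyc1 : xprod x (cycseq m i 1) = PP x i 1 m.
Proof. by rewrite /cycseq eqxx xprod_map PPE subn1. Qed.

Lemma cyc_identity : xprod x (cycseq m i m) =
  xprod x (cycseq m i 1) - \sum_(2 <= j < m) xprod x (cycseq m i j).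
Proof.
have hm := m3 Hcyc.
have hm2 : ((m - 2).+1 < m)%N by lia.
have K := key Hanti Hcomm Htri Hinc hm2.
rewrite (_ : (m - 2).+2 = m) in K; last by lia.
rewrite (_ : (m - 2).+1 = m.-1) in K; last by lia.
rewrite prod_cyc1 prod_cyc; last by lia.
have P1 : PP x i m m = 1 by rewrite /PP big_geq.
rewrite P1 mul1r K; congr (_ - _).
by apply: eq_big_nat => j hj; rewrite prod_cyc //; lia.
Qed.

End Main.

Theorem proposition3p5
  (n : nat) (A : algType rat) (x : 'I_n -> 'I_n -> A)
  (* the defining relations of the Fomin-Kirillov algebra E_n *)
  (Hanti : forall i j : 'I_n, i != j -> x i j = (- x j i)%R)
  (Hsq : forall i j : 'I_n, i != j -> (x i j * x i j = 0)%R)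
  (Hcomm : forall i j k l : 'I_n, uniq [:: i; j; k; l] ->
             (x i j * x k l = x k l * x i j)%R)
  (Htri : forall i j k : 'I_n, uniq [:: i; j; k] ->
             (x i j * x j k + x j k * x k i + x k i * x i j = 0)%R)
  (* the cycle i_1 < i_2 < ... < i_m *)
  (m : nat) (i : nat -> 'I_n)
  (Hinc : forall a b, (1 <= a)%N -> (a < b)%N -> (b <= m)%N -> (i a < i b)%N)
  (* the graph H *)
  (E : {set 'I_n * 'I_n})
  (Hwf : wf_edges E) (Hnc : noncrossing E) (Hconn : connected E)
  (Hcyc : unique_cycle E [seq i k | k <- iota 1 m])
  (* for each j, an admissible order s j of the edges of T_j *)
  (s : nat -> seq ('I_n * 'I_n))
  (Hs : forall j, (1 <= j)%N -> (j <= m)%N ->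
          clockwise_order
            (E :\ (if j == 1%N then nedge (i 1%N) (i m) else nedge (i j.-1) (i j)))
            (s j)) :
  xprod x (s m) = (xprod x (s 1%N) - \sum_(2 <= j < m) xprod x (s j))%R.
Proof.
have hm := m3 Hcyc.
have F := fact Hcomm Hinc Hwf Hnc Hcyc Hs.
rewrite F; last by lia.
rewrite F; last by lia.
rewrite (eq_big_nat _ _ (F2 := fun j => xprod x (filter (mem (Bs m i E)) (s 1%N)) *
   xprod x (cycseq m i j) * xprod x (filter (mem (As m i E)) (s 1%N)))%R); last first.
  by move=> j hj; rewrite F //; lia.
rewrite -GRing.mulr_suml -GRing.mulr_sumr -GRing.mulrBl -GRing.mulrBr.
by rewrite (cyc_identity Hanti Hcomm Htri Hinc Hcyc).
Qed.
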